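(* Let $0\le r\le n$ be integers and let $\alpha,\beta$ be indeterminates. Then \[\sum_{A\in\mathcal{A}_{n+1,r+1}} \alpha^{-|\mathrm{lrs}(A)|}\,\beta^{-|\mathrm{rls}(A)|} \;=\; \binom{n}{r}\prod_{i=r}^{n-1}\left(\alpha^{-1}+\beta^{-1}+i\right).\]
   Context: An assemblée of size $(m,s)$ is a collection of $s$ nonempty, pairwise disjoint, linearly ordered sets (blocks) whose union is $\{1,\dots,m\}$; the last element of a block is its block-end. The blocks are always listed in the canonical order in which the block-ends decrease from left to right, and the assemblée is identified with the word of length $m$ obtained by concatenating its blocks in this order (''left/right in $A$'' refers to this word). $\mathcal{A}_{m,s}$ denotes the set of assemblées of size $(m,s)$. For $A\in\mathcal{A}_{n+1,r+1}$ let $b_1>b_2>\dots>b_{r+1}$ be its block-ends. Then $\mathrm{lrs}(A)$ is the set of elements $x$ of $A$ with $x>b_1$ such that $x$ is larger than every element $y>b_1$ appearing to the right of $x$ in $A$; and $\mathrm{rls}(A)$ is the set of elements $x$ of $A$ with $x<b_{r+1}$ such that $x$ is larger than every element $y<b_{r+1}$ appearing to the left of $x$ in $A$. (Example: for $A=[2,10,12,7]\,[5,9,1,8,6]\,[3,11,4]$, $\mathrm{lrs}(A)=\{12,11\}$ and $\mathrm{rls}(A)=\{3,2\}$.) *)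

(* Defs.v *)
From mathcomp Require Import all_boot all_order all_algebra.
Set Implicit Arguments. Unset Strict Implicit. Unset Printing Implicit Defensive.
Import GRing.Theory.

(* An assemblee of size (m,s) is represented by the list of its blocks
   (each block a list of naturals, i.e. a linearly ordered set), listed in
   the canonical order: block-ends strictly decreasing from left to right. *)

Definition block_ends (A : seq (seq nat)) : seq nat := map (last 0) A.

Definition is_assemblee (m s : nat) (A : seq (seq nat)) : bool :=
  [&& size A == s,
      all (fun B => size B != 0) A,
      perm_eq (flatten A) (iota 1 m)
    & sorted (fun x y => y < x) (block_ends A)].

(* Finite list of candidates covering all assemblees of size (m,s):
   every assemblee A equals reshape (map size A) (flatten A), where
   flatten A is a permutation of 1..m and all block sizes are <= m. *)
Fixpoint all_lists (k : nat) (xs : seq nat) : seq (seq nat) :=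
  if k is k'.+1 then [seq x :: l | x <- xs, l <- all_lists k' xs]
  else [:: [::]].

Definition assemblee_candidates (m s : nat) : seq (seq (seq nat)) :=
  [seq reshape sh w
     | w <- permutations (iota 1 m), sh <- all_lists s (iota 0 m.+1)].

Definition assemblees (m s : nat) : seq (seq (seq nat)) :=
  undup [seq A <- assemblee_candidates m s | is_assemblee m s A].

Definition lrs (A : seq (seq nat)) : seq nat :=
  let w := flatten A in
  let b1 := head 0 (block_ends A) in
  [seq nth 0 w i | i <- iota 0 (size w) &
     (b1 < nth 0 w i) &&
     all (fun y => (b1 < y) ==> (y < nth 0 w i)) (drop i.+1 w)].

Definition rls (A : seq (seq nat)) : seq nat :=
  let w := flatten A in
  let bl := last 0 (block_ends A) in
  [seq nth 0 w i | i <- iota 0 (size w) &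
     (nth 0 w i < bl) &&
     all (fun y => (y < bl) ==> (y < nth 0 w i)) (take i w)].

Example ex_lrs : lrs [:: [:: 2; 10; 12; 7]; [:: 5; 9; 1; 8; 6]; [:: 3; 11; 4]] = [:: 12; 11].
Proof. by []. Qed.
Example ex_rls : rls [:: [:: 2; 10; 12; 7]; [:: 5; 9; 1; 8; 6]; [:: 3; 11; 4]] = [:: 2; 3].
Proof. by []. Qed.
Example ex_assemblee : is_assemblee 12 3 [:: [:: 2; 10; 12; 7]; [:: 5; 9; 1; 8; 6]; [:: 3; 11; 4]].
Proof. by []. Qed.

(* Main.v *)
Require Import Defs.
From mathcomp Require Import all_boot all_order all_algebra zify ring.
Import GRing.Theory.
Set Implicit Arguments. Unset Strict Implicit. Unset Printing Implicit Defensive.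

Lemma mem_all_lists k xs (l : seq nat) :
  (l \in all_lists k xs) = (size l == k) && all (fun x => x \in xs) l.
Proof.
elim: k l => [|k IH] [|y l] //=.
- apply/allpairsPdep => -[x [l' [_ _ //]]].
- apply/allpairsPdep/idP => [[x [l' [Hx Hl' [-> ->]]]]|].
    by move: Hl'; rewrite IH eqSS Hx => /andP[-> ->].
  rewrite eqSS => /and3P[Hs Hy Hl]; exists y, l; split => //.
  by rewrite IH Hs.
Qed.

Lemma size_le_flatten (A : seq (seq nat)) B : B \in A -> size B <= size (flatten A).
Proof.
elim: A => [|C A IH] //=; rewrite in_cons size_cat => /orP[/eqP->|/IH H].
  exact: leq_addr.
by rewrite (leq_trans H) // leq_addl.
Qed.

Lemma mem_assemblees m s A : (A \in assemblees m s) = is_assemblee m s A.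
Proof.
rewrite mem_undup mem_filter; apply/andP/idP => [[]//|H]; split => //.
move: (H) => /and4P[Hs Hn Hp Hsort].
rewrite /assemblee_candidates -(flattenK A); apply: allpairs_f.
  by rewrite mem_permutations.
rewrite mem_all_lists size_map Hs /=; apply/allP => x /mapP[B HB ->].
rewrite in_cons mem_iota add1n ltnS; case: (size B) (size_le_flatten HB) => //= k Hk.
by rewrite (leq_trans Hk) // (perm_size Hp) size_iota.
Qed.

Fixpoint rlmx (s : seq nat) : nat :=
  if s is x :: s' then rlmx s' + all (fun y => y < x) s' else 0.

Definition E1 (A : seq (seq nat)) := head 0 (block_ends A).
Definition LL (A : seq (seq nat)) := last 0 (block_ends A).
Definition hi A := [seq y <- flatten A | E1 A < y].
Definition lo A := [seq y <- flatten A | y < LL A].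

Lemma cnt_rl t w :
  count (fun i => (t < nth 0 w i) &&
     all (fun y => (t < y) ==> (y < nth 0 w i)) (drop i.+1 w)) (iota 0 (size w))
  = rlmx [seq y <- w | t < y].
Proof.
elim: w => [|x w IH] //=.
rewrite -(addn0 1) iotaDl count_map /=.
rewrite (eq_count (a2 := fun i => (t < nth 0 w i) &&
     all (fun y => (t < y) ==> (y < nth 0 w i)) (drop i.+1 w))) // IH.
case: (t < x) => /=; last by rewrite add0n.
by rewrite drop0 all_filter addnC.
Qed.

Lemma cnt_lr t w :
  count (fun i => (nth 0 w i < t) &&
     all (fun y => (y < t) ==> (y < nth 0 w i)) (take i w)) (iota 0 (size w))
  = rlmx (rev [seq y <- w | y < t]).
Proof.
elim/last_ind: w => [|w x IH] //.
rewrite size_rcons -addn1 iotaD count_cat /= add0n.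
rewrite (eq_in_count (a2 := fun i => (nth 0 w i < t) &&
     all (fun y => (y < t) ==> (y < nth 0 w i)) (take i w))); last first.
  move=> i; rewrite mem_iota /= add0n => Hi.
  by rewrite nth_rcons Hi -cats1 takel_cat // ltnW.
rewrite IH nth_rcons ltnn eqxx -cats1 take_size_cat // filter_cat /=.
case: (x < t) => /=; last by rewrite cats0 !addn0.
by rewrite cats1 rev_rcons /= all_rev all_filter addn0.
Qed.

Lemma size_lrs A : size (lrs A) = rlmx (hi A).
Proof. by rewrite /lrs size_map size_filter cnt_rl. Qed.

Lemma size_rls A : size (rls A) = rlmx (rev (lo A)).
Proof. by rewrite /rls size_map size_filter cnt_lr. Qed.
Fixpoint subst (P : pred nat) (w s : seq nat) : seq nat :=
  if w is x :: w' then
    if P x then head x s :: subst P w' (behead s) else x :: subst P w' s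
  else [::].

Fixpoint substB (P : pred nat) (A : seq (seq nat)) (s : seq nat) :=
  if A is B :: A' then subst P B s :: substB P A' (drop (count P B) s) else [::].

Lemma size_subst P w s : size (subst P w s) = size w.
Proof. by elim: w s => //= x w IH s; case: (P x) => /=; rewrite IH. Qed.

Lemma subst_cat P u v s :
  subst P (u ++ v) s = subst P u s ++ subst P v (drop (count P u) s).
Proof.
elim: u s => [|x u IH] s /=; first by rewrite drop0.
by case: (P x) => /=; rewrite IH //; case: s.
Qed.

Lemma flatten_substB P A s : flatten (substB P A s) = subst P (flatten A) s.
Proof. by elim: A s => //= B A IH s; rewrite subst_cat IH. Qed.

Lemma shape_substB P A s : shape (substB P A s) = shape A.
Proof. by elim: A s => //= B A IH s; rewrite size_subst IH. Qed.

Lemma last_subst P B : forall x s y, ~~ P (last x B) ->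
  last y (subst P (x :: B) s) = last x B.
Proof.
elim: B => [|z B IH] x s y /=; first by move=> /negbTE ->.
by move=> H; case: (P x) => /=; rewrite IH.
Qed.

Lemma ends_substB P A s : all (fun B => size B != 0) A ->
  all (fun e => ~~ P e) (block_ends A) -> block_ends (substB P A s) = block_ends A.
Proof.
elim: A s => //= -[|x B] A IH s //= Hn /andP[He Hes].
by rewrite IH // last_subst.
Qed.

Lemma filter_subst P w s : all P s -> size s = count P w ->
  [seq y <- subst P w s | P y] = s.
Proof.
elim: w s => [|x w IH] s /=; first by case: s.
case Px: (P x) => /=; last by rewrite Px => Hs Hsz; rewrite IH.
case: s => [|y s] //= /andP[Py Hs] [Hsz]; by rewrite Py IH.
Qed.

Lemma filter_subst_other P (Q : pred nat) w s : all P s -> (forall x, P x -> ~~ Q x) ->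
  [seq y <- subst P w s | Q y] = [seq y <- w | Q y].
Proof.
move=> + HPQ; elim: w s => [|x w IH] s //= Hs.
case Px: (P x) => /=; last by rewrite IH.
rewrite (negbTE (HPQ _ Px)); case: s Hs => [|y s] /=.
  by move=> _; rewrite (negbTE (HPQ _ Px)) IH.
by move=> /andP[Py Hs]; rewrite (negbTE (HPQ _ Py)) IH.
Qed.

Lemma perm_subst P w s : size s = count P w ->
  perm_eq (subst P w s) ([seq x <- w | ~~ P x] ++ s).
Proof.
elim: w s => [|x w IH] s /=; first by case: s.
case Px: (P x) => /=; last by move=> H; rewrite perm_cons IH.
case: s => [|y s] //= [Hsz].
apply: perm_trans (_ : perm_eq _ (y :: ([seq x <- w | ~~ P x] ++ s))) _.
  by rewrite perm_cons IH.
by rewrite -cat1s perm_catCA.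
Qed.

Lemma subst_id P w : subst P w [seq y <- w | P y] = w.
Proof. by elim: w => //= x w IH; case Px: (P x) => /=; rewrite IH. Qed.

Lemma subst_subst P w s t : all P s -> size s = count P w -> size t = count P w ->
  subst P (subst P w s) t = subst P w t.
Proof.
elim: w s t => [|x w IH] s t //=.
case Px: (P x) => /=; last by rewrite Px => Hs Hsz Ht; rewrite IH.
case: s => [|y s] //; case: t => [|z t] //= /andP[Py Hs] [Hsz] [Ht].
by rewrite Py IH.
Qed.

Lemma sorted_last_le (e : seq nat) : sorted (fun x y => y < x) e ->
  all (fun y => last 0 e <= y) e.
Proof.
case: e => [|x e] //=.
elim: e x => [|z e IH] x /=; first by rewrite leqnn.
move=> /andP[Hzx Hp]; move: (IH z Hp) => /= /andP[Hz ->].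
by rewrite Hz (leq_trans Hz (ltnW Hzx)).
Qed.

Lemma LL_E1 A : sorted (fun x y => y < x) (block_ends A) -> LL A <= E1 A.
Proof.
rewrite /LL /E1 => /sorted_last_le; case: (block_ends A) => //= x e.
by case/andP.
Qed.

Definition lowP A := fun y => y < LL A.
Definition rl A := reshape (shape A) (subst (lowP A) (flatten A) (rev (lo A))).

Lemma rlE A : rl A = substB (lowP A) A (rev (lo A)).
Proof.
by rewrite /rl -flatten_substB -(shape_substB (lowP A) A (rev (lo A))) flattenK.
Qed.

Section RL.
Variables (m s : nat) (A : seq (seq nat)).
Hypothesis HA : is_assemblee m s A.

Let Hn : all (fun B => size B != 0) A. Proof. by case/and4P: HA. Qed.
Let Hsort : sorted (fun x y => y < x) (block_ends A). Proof. by case/and4P: HA. Qed.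
Let Hperm : perm_eq (flatten A) (iota 1 m). Proof. by case/and4P: HA. Qed.

Lemma ends_rl : block_ends (rl A) = block_ends A.
Proof.
rewrite rlE ends_substB //; apply/allP => e He.
by move/allP: (sorted_last_le Hsort) => /(_ e He); rewrite /lowP /LL -leqNgt.
Qed.

Lemma flatten_rl : flatten (rl A) = subst (lowP A) (flatten A) (rev (lo A)).
Proof. by rewrite rlE flatten_substB. Qed.

Lemma shape_rl : shape (rl A) = shape A.
Proof. by rewrite rlE shape_substB. Qed.

Lemma LL_rl : LL (rl A) = LL A.
Proof. by rewrite /LL ends_rl. Qed.

Lemma E1_rl : E1 (rl A) = E1 A.
Proof. by rewrite /E1 ends_rl. Qed.

Lemma lo_rl : lo (rl A) = rev (lo A).
Proof.
rewrite {1}/lo flatten_rl LL_rl; apply: filter_subst.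
  by rewrite all_rev /lo; apply/allP => y; rewrite mem_filter => /andP[].
by rewrite size_rev /lo size_filter.
Qed.

Lemma hi_rl : hi (rl A) = hi A.
Proof.
rewrite /hi flatten_rl E1_rl; apply: filter_subst_other.
  by rewrite all_rev /lo; apply/allP => y; rewrite mem_filter => /andP[].
move=> x; rewrite /lowP -leqNgt => Hx.
exact: leq_trans (ltnW Hx) (LL_E1 Hsort).
Qed.

Lemma rlK : rl (rl A) = A.
Proof.
rewrite {1}/rl shape_rl lo_rl revK flatten_rl /lowP LL_rl -/(lowP A).
rewrite subst_subst.
- by rewrite /lo subst_id flattenK.
- by rewrite all_rev /lo; apply/allP => y; rewrite mem_filter => /andP[].
- by rewrite size_rev /lo size_filter.
- by rewrite /lo size_filter.
Qed.

Lemma rl_assemblee : is_assemblee m s (rl A).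
Proof.
case/and4P: HA => Hs _ _ _.
apply/and4P; split.
- by rewrite /rl size_reshape /shape size_map.
- have := shape_rl; rewrite /shape => Hsh.
  have -> : all (fun B => size B != 0) (rl A) = all (fun n => n != 0) (map size (rl A)).
    by rewrite all_map.
  by rewrite Hsh all_map.
- rewrite flatten_rl.
  have Hsz : size (rev (lo A)) = count (lowP A) (flatten A).
    by rewrite size_rev /lo size_filter.
  apply: (perm_trans (perm_subst Hsz)).
  apply: (perm_trans _ Hperm); rewrite perm_sym -(perm_filterC (lowP A) (flatten A)).
  by rewrite perm_catC perm_cat2l /lo perm_sym perm_rev.
- by rewrite ends_rl.
Qed.

End RL.
Definition up v x := if v <= x then x.+1 else x.
Definition dn v x := if v < x then x.-1 else x.

Lemma up_mono v x y : (up v x < up v y) = (x < y).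
Proof. by rewrite /up; case: ifP; case: ifP; lia. Qed.

Lemma up_inj v : injective (up v).
Proof. by move=> x y; rewrite /up; case: ifP; case: ifP; lia. Qed.

Lemma upK v x : dn v (up v x) = x.
Proof. by rewrite /up /dn; case: (leqP v x) => H; case: ifP => //= H2; lia. Qed.

Lemma dnK v x : x != v -> up v (dn v x) = x.
Proof.
rewrite /dn; case: (ltnP v x) => H Hx; rewrite /up; case: ifP => H2; case: x H Hx H2 => //= *; lia.
Qed.

Lemma up_neq v x : up v x != v.
Proof. by rewrite /up; case: ifP; lia. Qed.

Lemma up0 v : 0 < v -> up v 0 = 0.
Proof. by rewrite /up; case: ifP; lia. Qed.

Fixpoint insAt (p x : nat) (A : seq (seq nat)) :=
  match p, A with
  | 0, B :: A' => (x :: B) :: A'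
  | p'.+1, B :: A' => B :: insAt p' x A'
  | _, [::] => [::]
  end.

Fixpoint delAt (p : nat) (A : seq (seq nat)) :=
  match p, A with
  | 0, B :: A' => behead B :: A'
  | p'.+1, B :: A' => B :: delAt p' A'
  | _, [::] => [::]
  end.

Definition ins p v A := insAt p v (map (map (up v)) A).
Definition firstsing p (A : seq (seq nat)) := all (fun B => size B == 1) (take p A).

Lemma size_insAt p x A : size (insAt p x A) = size A.
Proof. by elim: A p => [|B A IH] [|p] //=; rewrite IH. Qed.

Lemma size_delAt p A : size (delAt p A) = size A.
Proof. by elim: A p => [|B A IH] [|p] //=; rewrite IH. Qed.

Lemma flatten_insAt p x A : p < size A ->
  flatten (insAt p x A) = flatten (take p A) ++ x :: flatten (drop p A).
Proof. by elim: A p => [|B A IH] [|p] //= Hp; rewrite IH // catA. Qed.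

Lemma perm_insAt p x A : p < size A -> perm_eq (flatten (insAt p x A)) (x :: flatten A).
Proof.
move=> Hp; rewrite flatten_insAt //.
have -> : flatten A = flatten (take p A) ++ flatten (drop p A) by rewrite -flatten_cat cat_take_drop.
by rewrite -cat1s perm_catCA.
Qed.

Lemma ends_insAt p x A : all (fun B => size B != 0) A ->
  block_ends (insAt p x A) = block_ends A.
Proof.
elim: A p => [|B A IH] [|p] //= /andP[HB HA]; last by rewrite IH.
by case: B HB.
Qed.

Lemma take_insAt p x A : take p (insAt p x A) = take p A.
Proof. by elim: A p => [|B A IH] [|p] //=; rewrite IH. Qed.

Lemma nth_insAt p x A : p < size A -> nth [::] (insAt p x A) p = x :: nth [::] A p.
Proof. by elim: A p => [|B A IH] [|p] //= Hp; rewrite IH. Qed.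

Lemma nth_insAt_neq p q x A : q != p -> nth [::] (insAt p x A) q = nth [::] A q.
Proof. by elim: A p q => [|B A IH] [|p] [|q] //= Hq; rewrite IH. Qed.

Lemma insAt_delAt p A : p < size A -> size (nth [::] A p) != 0 ->
  insAt p (head 0 (nth [::] A p)) (delAt p A) = A.
Proof.
elim: A p => [|B A IH] [|p] //=; first by case: B.
by move=> Hp Hn; rewrite IH.
Qed.

Lemma map_delAt f p A : map (map f) (delAt p A) = delAt p (map (map f) A).
Proof. by elim: A p => [|B A IH] [|p] //=; [case: B | rewrite IH]. Qed.

Lemma flatten_delAt p A : p < size A -> size (nth [::] A p) != 0 ->
  perm_eq (flatten A) (head 0 (nth [::] A p) :: flatten (delAt p A)).
Proof.
move=> Hp Hn; rewrite -{1}(insAt_delAt Hp Hn); apply: perm_insAt.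
by rewrite size_delAt.
Qed.

Lemma ends_map v A : 0 < v ->
  block_ends (map (map (up v)) A) = map (up v) (block_ends A).
Proof.
move=> Hv; rewrite /block_ends -!map_comp; apply: eq_map => B /=.
by rewrite -{1}(up0 Hv) last_map.
Qed.

Lemma flatten_map (f : nat -> nat) (A : seq (seq nat)) : flatten (map (map f) A) = map f (flatten A).
Proof. by elim: A => //= B A ->; rewrite map_cat. Qed.

Lemma perm_iota_up m v : 0 < v <= m ->
  perm_eq (iota 1 m) (v :: map (up v) (iota 1 m.-1)).
Proof.
case/andP=> H1 H2.
have Em : m = (v.-1 + 1) + (m - v) by lia.
have Em1 : m.-1 = v.-1 + (m - v) by lia.
rewrite {1}Em Em1 !iotaD map_cat.
have -> : map (up v) (iota 1 v.-1) = iota 1 v.-1.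
  rewrite -[RHS]map_id; apply/eq_in_map => x.
  by rewrite mem_iota /up; case: ifP; lia.
have -> : map (up v) (iota (1 + v.-1) (m - v)) = iota (1 + (v.-1 + 1)) (m - v).
  have -> : 1 + (v.-1 + 1) = (1 + v.-1).+1 by lia.
  have : v <= 1 + v.-1 by lia.
  elim: (m - v) (1 + v.-1) => [|n IH] k Hk //=.
  by rewrite IH ?(leq_trans Hk) // /up Hk.
have -> : 1 + v.-1 = v by lia.
rewrite -catA /= -cat1s perm_catCA /=.
by have -> : 1 + (v.-1 + 1) = v.+1 by lia.
Qed.

Lemma ins_ok m s p v A : 0 < v <= m -> p < size A -> all (fun B => size B != 0) A ->
  is_assemblee m s (ins p v A) = is_assemblee m.-1 s A.
Proof.
move=> Hv Hp Hn; rewrite /is_assemblee /ins size_insAt size_map.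
have -> : all (fun B => size B != 0) (insAt p v (map (map (up v)) A)) = true.
  apply/allP => B HB.
  case: (nthP [::] HB) => q; rewrite size_insAt size_map => Hq <-.
  case: (eqVneq q p) => [->|Hqp]; first by rewrite nth_insAt // size_map.
  rewrite nth_insAt_neq // (nth_map [::]) // size_map.
  by move/allP: Hn; apply; apply: mem_nth.
rewrite Hn ends_insAt; last first.
  by rewrite all_map; apply/allP => B HB /=; rewrite size_map; move/allP: Hn; apply.
rewrite ends_map ?(andP Hv).1 // sorted_map.
rewrite (eq_sorted (e' := fun x y => y < x)); last by move=> x y /=; rewrite up_mono.
have Hp' : p < size (map (map (up v)) A) by rewrite size_map.
rewrite (permPl (perm_insAt v Hp')) (permPr (perm_iota_up Hv)) perm_cons flatten_map.
have -> : perm_eq (map (up v) (flatten A)) (map (up v) (iota 1 m.-1)) =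
          perm_eq (flatten A) (iota 1 m.-1).
  apply/idP/idP => H; first exact: (perm_map_inj (@up_inj v) H).
  exact: perm_map H.
by [].
Qed.
Lemma delAt_insAt p x X : delAt p (insAt p x X) = X.
Proof. by elim: X p => [|B X IH] [|p] //=; rewrite IH. Qed.

Lemma flatten_take_sing (X : seq (seq nat)) p : all (fun B => size B == 1) (take p X) ->
  flatten (take p X) = take p (block_ends X).
Proof.
elim: X p => [|B X IH] [|p] //= /andP[HB H].
by case: B HB => [|e [|]] //= _; rewrite IH.
Qed.

Lemma filter_nil (Q : pred nat) s : all (fun x => ~~ Q x) s -> [seq x <- s | Q x] = [::].
Proof. by elim: s => //= x s IH /andP[/negbTE -> /IH]. Qed.

Lemma mem_ends A e : all (fun B => size B != 0) A -> e \in block_ends A -> e \in flatten A.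
Proof.
elim: A => //= -[|x B] A IH //= HA; rewrite in_cons => /orP[/eqP->|/(IH HA) H].
  by rewrite -cat_cons mem_cat mem_last.
by rewrite -cat_cons mem_cat H orbT.
Qed.

Lemma sorted_head_ge (e : seq nat) : sorted (fun x y => y < x) e ->
  all (fun y => y <= head 0 e) e.
Proof.
case: e => [|x e] //= Hp; rewrite leqnn /=.
have : all (fun y => y < x) e.
  by apply: (order_path_min _ Hp) => u v w /= H1 H2; exact: ltn_trans H1.
by apply: sub_all => y; apply: ltnW.
Qed.

Lemma size_flatten_ge (A : seq (seq nat)) : all (fun B => size B != 0) A ->
  size A <= size (flatten A).
Proof.
elim: A => //= B A IH /andP[HB /IH H]; rewrite size_cat.
by case: (size B) HB => // k _; rewrite addSn ltnS (leq_trans H) // leq_addl.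
Qed.

Lemma ass_le m s A : is_assemblee m s A -> s <= m.
Proof.
case/and4P => /eqP <- Hn Hp _.
by rewrite -(size_iota 1 m) -(perm_size Hp) size_flatten_ge.
Qed.

Lemma upv_lt v x : (up v x < v) = (x < v).
Proof. by rewrite /up; case: ifP; lia. Qed.

Lemma v_ltup v x : (v < up v x) = (v <= x).
Proof. by rewrite /up; case: ifP; lia. Qed.

Lemma ends_ins p v A : 0 < v -> all (fun B => size B != 0) A ->
  block_ends (ins p v A) = map (up v) (block_ends A).
Proof.
move=> Hv Hn; rewrite /ins ends_insAt ?ends_map //.
by rewrite all_map; apply/allP => B HB /=; rewrite size_map; move/allP: Hn; apply.
Qed.

Lemma E1_ins p v A : 0 < v -> all (fun B => size B != 0) A ->
  E1 (ins p v A) = up v (E1 A).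
Proof.
move=> Hv Hn; rewrite /E1 ends_ins //; case: (block_ends A) => //=.
by rewrite up0.
Qed.

Lemma LL_ins p v A : 0 < v -> all (fun B => size B != 0) A ->
  LL (ins p v A) = up v (LL A).
Proof. by move=> Hv Hn; rewrite /LL ends_ins // -{1}(up0 Hv) last_map. Qed.

Lemma filter_ins (Q : pred nat) p v A : p < size A -> firstsing p A ->
  (forall e, e \in block_ends A -> ~~ Q (up v e)) -> 0 < v ->
  all (fun B => size B != 0) A ->
  [seq y <- flatten (ins p v A) | Q y] = [seq y <- v :: map (up v) (flatten A) | Q y].
Proof.
move=> Hp Hf HQ Hv Hn.
have Hp' : p < size (map (map (up v)) A) by rewrite size_map.
rewrite /ins flatten_insAt // -flatten_map.
set X := map (map (up v)) A.
have -> : flatten X = flatten (take p X) ++ flatten (drop p X).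
  by rewrite -flatten_cat cat_take_drop.
have H0 : [seq y <- flatten (take p X) | Q y] = [::].
  rewrite flatten_take_sing; last by rewrite /X -map_take all_map; apply: sub_all Hf => B /=; rewrite size_map.
  rewrite /X ends_map // -map_take; apply: filter_nil; rewrite all_map.
  by apply/allP => e He /=; apply: HQ; apply: mem_take He.
by rewrite filter_cat /= filter_cat H0 /=.
Qed.

Lemma filter_map_up (P P' : pred nat) v s : (forall y, P (up v y) = P' y) ->
  [seq y <- map (up v) s | P y] = map (up v) [seq y <- s | P' y].
Proof. by move=> HP; rewrite filter_map; congr map; apply: eq_filter => y /=; rewrite HP. Qed.

Lemma rlmx_map_up v s : rlmx (map (up v) s) = rlmx s.
Proof.
elim: s => //= x s ->; rewrite all_map (eq_all (a2 := fun y => y < x)) // => y /=.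
exact: up_mono.
Qed.

Section Counts.
Variables (m s p v : nat) (A : seq (seq nat)).
Hypotheses (HA : is_assemblee m.-1 s A) (Hf : firstsing p A) (Hps : p < s) (Hv : 0 < v <= m).

Let Hn : all (fun B => size B != 0) A. Proof. by case/and4P: HA. Qed.
Let Hsort : sorted (fun x y => y < x) (block_ends A). Proof. by case/and4P: HA. Qed.
Let Hperm : perm_eq (flatten A) (iota 1 m.-1). Proof. by case/and4P: HA. Qed.
Let Hsz : size A = s. Proof. by case/and4P: HA => /eqP. Qed.
Let Hv0 : 0 < v. Proof. by case/andP: Hv. Qed.

Lemma memA x : (x \in flatten A) = (0 < x < m).
Proof.
rewrite (perm_mem Hperm) mem_iota.
have : 0 < m by case/andP: Hv => H1 H2; exact: leq_trans H1 H2.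
by case: m => // k _; rewrite add1n.
Qed.

Lemma ends_bounds e : e \in block_ends A -> LL A <= e <= E1 A.
Proof.
move=> He; move/allP: (sorted_last_le Hsort) => /(_ e He) ->.
by move/allP: (sorted_head_ge Hsort) => /(_ e He).
Qed.

Lemma hi_cnt : rlmx (hi (ins p v A)) = rlmx (hi A) + ((E1 A < v) && (v == m)).
Proof.
rewrite /hi E1_ins // filter_ins //; first last.
- move=> e /ends_bounds /andP[_ He]; rewrite up_mono -leqNgt //.
- by rewrite Hsz.
rewrite /= upv_lt (@filter_map_up (fun y => up v (E1 A) < y) (fun y => E1 A < y)); last by move=> y; rewrite up_mono.
case: (ltnP (E1 A) v) => HE /=; last by rewrite rlmx_map_up addn0.
rewrite rlmx_map_up; congr (_ + nat_of_bool _); case: (eqVneq v m) => [Evm|Hvm].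
  apply/allP => y /mapP[z]; rewrite mem_filter memA => /andP[_ /andP[_ Hz]] ->.
  by rewrite /up; case: ifP; lia.
apply/negbTE/negP => /allP /(_ (up v m.-1)).
have Hvm' : v < m by rewrite ltn_neqAle Hvm; case/andP: Hv.
rewrite map_f; last by rewrite mem_filter memA; apply/andP; split; lia.
by rewrite /up; case: ifP; lia.
Qed.

Lemma lo_cnt : rlmx (lo (ins p v A)) = rlmx (lo A) + (v == LL A).
Proof.
rewrite /lo LL_ins // filter_ins //; first last.
- move=> e /ends_bounds /andP[He _]; rewrite up_mono -leqNgt //.
- by rewrite Hsz.
rewrite /= v_ltup (@filter_map_up (fun y => y < up v (LL A)) (fun y => y < LL A)); last by move=> y; rewrite up_mono.
case: (leqP v (LL A)) => HL /=; last first.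
  have -> : (v == LL A) = false by apply/negbTE; rewrite neq_ltn HL orbT.
  by rewrite rlmx_map_up addn0.
rewrite rlmx_map_up; congr (_ + nat_of_bool _); case: (eqVneq v (LL A)) => [Evm|Hvm].
  apply/allP => y /mapP[z]; rewrite mem_filter => /andP[Hz _] ->.
  by rewrite /up; case: ifP; lia.
apply/negbTE/negP => /allP /(_ (up v (LL A).-1)).
have HLm : LL A < m.
  have : LL A \in flatten A.
    have Hne : block_ends A != [::].
      by rewrite -size_eq0 size_map Hsz; move: Hps; case: (s).
    apply: mem_ends Hn _; rewrite /LL; case: (block_ends A) Hne => // x e _.
    exact: mem_last.
  by rewrite memA => /andP[].
have Hvm' : v < LL A by rewrite ltn_neqAle Hvm.
rewrite map_f; last by rewrite mem_filter memA; apply/andP; split; lia.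
by rewrite /up; case: ifP; lia.
Qed.

End Counts.
Lemma map_up_dn v (X : seq (seq nat)) : v \notin flatten X ->
  map (map (up v)) (map (map (dn v)) X) = X.
Proof.
elim: X => //= B X IH; rewrite mem_cat negb_or => /andP[HB HX]; rewrite IH //.
congr (_ :: _); rewrite -map_comp -[RHS]map_id; apply/eq_in_map => y Hy /=.
by apply: dnK; apply: contraNneq HB => <-.
Qed.

Lemma nonempty_delAt p (A : seq (seq nat)) : all (fun B => size B != 0) A ->
  1 < size (nth [::] A p) -> all (fun B => size B != 0) (delAt p A).
Proof.
elim: A p => [|B A IH] [|p] //= /andP[HB HA]; first by rewrite HA andbT; case: B HB => // x [].
by move=> H; rewrite HB IH.
Qed.

Lemma firstsing_ins p v A : firstsing p (ins p v A) = firstsing p A.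
Proof.
rewrite /firstsing /ins take_insAt -map_take all_map; apply: eq_all => B /=.
by rewrite size_map.
Qed.

Lemma firstsing_delAt p A : firstsing p (delAt p A) = firstsing p A.
Proof.
rewrite /firstsing; congr all.
by elim: A p => [|B A IH] [|p] //=; rewrite IH.
Qed.

Lemma firstsing_map f p A : firstsing p (map (map f) A) = firstsing p A.
Proof.
rewrite /firstsing -map_take all_map; apply: eq_all => B /=.
by rewrite size_map.
Qed.

Lemma nth_nonempty p (A : seq (seq nat)) : all (fun B => size B != 0) A -> p < size A ->
  size (nth [::] A p) != 0.
Proof. by move=> /allP H Hp; apply: H; apply: mem_nth. Qed.

Definition Lp m s p := [seq A <- assemblees m s | firstsing p A].

Lemma Qsplit m s p : p < s ->
  perm_eq [seq A <- assemblees m s | firstsing p A && (1 < size (nth [::] A p))]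
          [seq ins p v A' | A' <- Lp m.-1 s p, v <- iota 1 m].
Proof.
move=> Hps; apply: uniq_perm.
- by rewrite filter_uniq // undup_uniq.
- apply: allpairs_uniq; [by rewrite filter_uniq // undup_uniq | exact: iota_uniq | ].
  move=> [A1 v1] [A2 v2] /allpairsP[[x1 y1] /= [H1 _ [-> ->]]].
  move=> /allpairsP[[x2 y2] /= [H2 _ [-> ->]]] /= E.
  move: H1 H2; rewrite !mem_filter !mem_assemblees => /andP[_ /and4P[/eqP S1 _ _ _]].
  move=> /andP[_ /and4P[/eqP S2 _ _ _]].
  have : nth [::] (ins p y1 x1) p = nth [::] (ins p y2 x2) p by rewrite E.
  rewrite /ins !nth_insAt ?size_map ?S1 ?S2 // => -[Ey _]; subst y2.
  move: E; rewrite /ins => /(congr1 (delAt p)); rewrite !delAt_insAt.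
  by move/(inj_map (inj_map (@up_inj y1))) => ->.
- move=> A; apply/idP/idP.
  + rewrite mem_filter mem_assemblees => /andP[/andP[Hf Hsz] HA].
    move: (HA) => /and4P[/eqP HsA Hn Hperm _].
    have HpA : p < size A by rewrite HsA.
    have Hne : size (nth [::] A p) != 0 by case: (size _) Hsz.
    set v := head 0 (nth [::] A p).
    set A' := map (map (dn v)) (delAt p A).
    have Hpd := flatten_delAt HpA Hne.
    have Hv : v \notin flatten (delAt p A).
      have : uniq (flatten A) by rewrite (perm_uniq Hperm) iota_uniq.
      by rewrite (perm_uniq Hpd) /= => /andP[].
    have EA : A = ins p v A' by rewrite /ins map_up_dn // -/v insAt_delAt.
    have Hvm : 0 < v <= m.
      have : v \in flatten A by rewrite (perm_mem Hpd) mem_head.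
      by rewrite (perm_mem Hperm) mem_iota add1n ltnS.
    have Hn' : all (fun B => size B != 0) A'.
      rewrite /A' all_map; apply: sub_all (nonempty_delAt Hn Hsz) => B /=.
      by rewrite size_map.
    apply/allpairsP; exists (A', v); split => //=; last by rewrite mem_iota add1n ltnS.
    rewrite mem_filter mem_assemblees -(@ins_ok m s p v A' Hvm) -?EA //.
      by rewrite HA andbT /A' firstsing_map firstsing_delAt.
    by rewrite /A' size_map size_delAt.
  + move/allpairsP => [[A' v] /= [HA' Hv ->]].
    move: HA'; rewrite mem_filter mem_assemblees => /andP[Hf HA'].
    move: Hv; rewrite mem_iota add1n ltnS => Hv.
    move: (HA') => /and4P[/eqP HsA Hn _ _].
    rewrite mem_filter mem_assemblees ins_ok ?HsA // HA' firstsing_ins Hf andbT /=.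
    rewrite /ins nth_insAt ?size_map ?HsA // /= (nth_map [::]) ?HsA // size_map.
    by rewrite ltnS lt0n nth_nonempty // HsA.
Qed.

Lemma sing_eq (A : seq (seq nat)) : all (fun B => size B == 1) A ->
  A = map (fun x => [:: x]) (block_ends A).
Proof. by elim: A => //= -[|x [|]] A IH //= /IH <-. Qed.

Definition A0 s := map (fun x => [:: x]) (rev (iota 1 s)).

Lemma ends_A0 s : block_ends (A0 s) = rev (iota 1 s).
Proof. by rewrite /block_ends /A0 -map_comp map_id. Qed.

Lemma A0_ok s : is_assemblee s s (A0 s).
Proof.
apply/and4P; split.
- by rewrite /A0 size_map size_rev size_iota.
- by rewrite /A0 all_map; apply/allP.
- by rewrite /A0 flatten_seq1 perm_rev.
- by rewrite ends_A0 rev_sorted iota_ltn_sorted.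
Qed.

Lemma sing_char m s A : is_assemblee m s A -> firstsing s A -> m = s /\ A = A0 s.
Proof.
move=> HA; move: (HA) => /and4P[/eqP HsA Hn Hperm Hsort].
move=> Hf; have Hall : all (fun B => size B == 1) A by move: Hf; rewrite /firstsing -HsA take_size.
have Ef : flatten A = block_ends A.
  have := @flatten_take_sing A (size A); rewrite !take_size => -> //.
  by rewrite take_oversize // size_map.
have Ems : m = s by rewrite -(size_iota 1 m) -(perm_size Hperm) Ef size_map HsA.
split => //; rewrite Ems in Hperm.
rewrite /A0 (sing_eq Hall); suff -> : block_ends A = rev (iota 1 s) by [].
apply: (sorted_eq (leT := fun x y => y < x)).
- by move=> x y z /= H1 H2; exact: ltn_trans H2 H1.
- by move=> x y /andP[H1 H2]; move: (ltn_trans H1 H2); rewrite ltnn.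
- exact: Hsort.
- by rewrite rev_sorted iota_ltn_sorted.
- by rewrite -Ef (permPl Hperm) perm_sym perm_rev.
Qed.

Lemma sing_hilo m s A : is_assemblee m s A -> firstsing s A -> hi A = [::] /\ lo A = [::].
Proof.
move=> HA; move: (HA) => /and4P[/eqP HsA Hn Hperm Hsort].
rewrite /firstsing -HsA take_size => Hall.
have Ef : flatten A = block_ends A.
  have := @flatten_take_sing A (size A); rewrite !take_size => -> //.
  by rewrite take_oversize // size_map.
rewrite /hi /lo Ef; split; apply: filter_nil.
  by apply: sub_all (sorted_head_ge Hsort) => y; rewrite /E1 -leqNgt.
by apply: sub_all (sorted_last_le Hsort) => y; rewrite /LL -leqNgt.
Qed.

Lemma ends_range n s A : is_assemblee n s A -> 0 < s ->
  [/\ 0 < LL A, LL A <= E1 A & E1 A <= n].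
Proof.
move=> HA Hs; move: (HA) => /and4P[/eqP HsA Hn Hperm Hsort].
have Hne : block_ends A != [::] by rewrite -size_eq0 size_map HsA; case: (s) Hs.
have HL : LL A \in block_ends A by rewrite /LL; case: (block_ends A) Hne => // x e _; exact: mem_last.
have HE : E1 A \in block_ends A by rewrite /E1; case: (block_ends A) Hne => // x e _; exact: mem_head.
move: (mem_ends Hn HL) (mem_ends Hn HE); rewrite !(perm_mem Hperm) !mem_iota add1n !ltnS.
move=> /andP[-> _] /andP[_ ->]; split => //; exact: LL_E1.
Qed.
Section Ring.
Variables (R : comRingType) (a b : R).
Local Open Scope ring_scope.

Definition wt2 A := a ^+ rlmx (hi A) * b ^+ rlmx (lo A).
Definition cf m v A : R := if (E1 A < v)%N then (if v == m then a else 1)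
   else if (v <= LL A)%N then (if v == LL A then b else 1) else 1.

Lemma wt2_ins m s p v A : is_assemblee m.-1 s A -> firstsing p A -> (p < s)%N ->
  (0 < v <= m)%N -> wt2 (ins p v A) = cf m v A * wt2 A.
Proof.
move=> HA Hf Hps Hv.
rewrite /wt2 (hi_cnt HA Hf Hps Hv) (lo_cnt HA Hf Hps Hv) !exprD /cf.
have HLE : (LL A <= E1 A)%N by apply: LL_E1; case/and4P: HA.
case: (ltnP (E1 A) v) => HE /=.
  have -> : (v == LL A) = false by apply/negbTE; rewrite neq_ltn (leq_ltn_trans HLE HE) orbT.
  by case: (v == m) => /=; rewrite ?expr0 ?expr1 ?mulr1 ?mul1r ?addn0; ring.
case: (leqP v (LL A)) => HL /=.
  by case: (v == LL A) => /=; rewrite ?expr0 ?expr1 ?mulr1 ?mul1r ?addn0; ring.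
have -> : (v == LL A) = false by apply/negbTE; rewrite neq_ltn HL orbT.
by rewrite /= ?expr0 ?mulr1 ?mul1r; ring.
Qed.

Lemma sum_const1 (s : seq nat) (F : nat -> R) : (forall v, v \in s -> F v = 1) ->
  \sum_(v <- s) F v = (size s)%:R.
Proof.
move=> H; rewrite (eq_big_seq (fun=> 1)) //; elim: s {H} => [|x s IH].
  by rewrite big_nil.
by rewrite big_cons IH /= -natr1 addrC.
Qed.

Lemma sum_last1 k n (F : nat -> R) : (forall v, v \in iota k n -> F v = 1) ->
  \sum_(v <- iota k n.+1) F v = (n%:R + F (k + n)%N).
Proof.
move=> H; rewrite -addn1 iotaD big_cat /= big_cons big_nil addr0 sum_const1 //.
by rewrite size_iota.
Qed.

Lemma sum_cf_gen m L E (F : nat -> R) : (0 < L)%N -> (L <= E)%N -> (E < m)%N ->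
  (forall v, F v = if (E < v)%N then (if v == m then a else 1)
     else if (v <= L)%N then (if v == L then b else 1) else 1) ->
  \sum_(v <- iota 1 m) F v = a + b + (m - 2)%:R.
Proof.
move=> H0 HLE HEm HF.
have Em : m = ((L.-1.+1 + (E - L)) + (m - E).-1.+1)%N by lia.
rewrite {1}Em !iotaD !big_cat /=.
rewrite sum_last1; last first.
  move=> v; rewrite mem_iota HF => /andP[H1 H2].
  have -> : (E < v)%N = false by apply/negbTE; rewrite -leqNgt; lia.
  have -> : (v <= L)%N by lia.
  by have -> : (v == L) = false by apply/negbTE; lia.
rewrite sum_const1; last first.
  move=> v; rewrite mem_iota HF => /andP[H1 H2].
  have -> : (E < v)%N = false by apply/negbTE; rewrite -leqNgt; lia.
  by have -> : (v <= L)%N = false by apply/negbTE; rewrite -ltnNge; lia.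
rewrite sum_last1; last first.
  move=> v; rewrite mem_iota HF => /andP[H1 H2].
  have -> : (E < v)%N by lia.
  by have -> : (v == m) = false by apply/negbTE; lia.
rewrite size_iota.
have -> : F (1 + L.-1)%N = b.
  rewrite HF.
  have -> : (E < 1 + L.-1)%N = false by apply/negbTE; rewrite -leqNgt; lia.
  have -> : (1 + L.-1 <= L)%N by lia.
  by have -> : (1 + L.-1 == L)%N by apply/eqP; lia.
have -> : F (1 + (L.-1.+1 + (E - L)) + (m - E).-1)%N = a.
  rewrite HF.
  have -> : (E < 1 + (L.-1.+1 + (E - L)) + (m - E).-1)%N by lia.
  by have -> : (1 + (L.-1.+1 + (E - L)) + (m - E).-1 == m)%N by apply/eqP; lia.
have -> : (m - 2)%N = (L.-1 + (E - L) + (m - E).-1)%N by lia.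
rewrite !natrD; ring.
Qed.

Lemma sum_cf m A : (0 < LL A)%N -> (LL A <= E1 A)%N -> (E1 A < m)%N ->
  \sum_(v <- iota 1 m) cf m v A = a + b + (m - 2)%:R.
Proof. by move=> H0 H1 H2; apply: sum_cf_gen H0 H1 H2 _. Qed.

Definition Sp p m s := \sum_(A <- assemblees m s | firstsing p A) wt2 A.

Lemma Sp_rec m s p : (p < s)%N ->
  Sp p m s = (a + b + (m - 2)%:R) * Sp p m.-1 s + Sp p.+1 m s.
Proof.
move=> Hps; rewrite /Sp (bigID (fun A => size (nth [::] A p) == 1%N)) /= addrC.
congr (_ + _); last first.
  rewrite big_seq_cond [RHS]big_seq_cond; apply: eq_bigl => A.
  case HA: (A \in _) => //=; rewrite mem_assemblees in HA.
  move: HA => /and4P[/eqP HsA _ _ _].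
  by rewrite /firstsing (take_nth [::]) ?HsA // all_rcons andbC.
have -> : \sum_(A <- assemblees m s | firstsing p A && ~~ (size (nth [::] A p) == 1%N)) wt2 A
   = \sum_(A <- [seq A <- assemblees m s | firstsing p A && (1 < size (nth [::] A p))%N]) wt2 A.
  rewrite big_filter big_seq_cond [RHS]big_seq_cond; apply: eq_bigl => A.
  case HA: (A \in _) => //=; rewrite mem_assemblees in HA.
  move: HA => /and4P[/eqP HsA Hn _ _].
  have := @nth_nonempty p A Hn; rewrite HsA => /(_ Hps).
  by case: (size _) => [|[|k]].
rewrite (perm_big _ (Qsplit m Hps)) big_allpairs_dep /=.
rewrite big_distrr /= -[in RHS]big_filter /Lp; apply: eq_big_seq => A' HA'.
move: HA'; rewrite mem_filter mem_assemblees => /andP[Hf HA'].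
rewrite (eq_big_seq (fun v => cf m v A' * wt2 A')); last first.
  by move=> v; rewrite mem_iota add1n ltnS => Hv; rewrite (wt2_ins HA').
have Hs0 : (0 < s)%N by case: (s) Hps.
have [H1 H2 H3] := ends_range HA' Hs0.
have Hm : (E1 A' < m)%N.
  have := ass_le HA'; case: (m) H3 Hs0 => //= k; lia.
by rewrite -big_distrl sum_cf.
Qed.

Lemma Sp_base m s : Sp s m s = (m == s)%:R.
Proof.
rewrite /Sp big_mkcond /=.
have Hwt : forall A, A \in assemblees m s -> firstsing s A -> wt2 A = 1.
  move=> A; rewrite mem_assemblees => HA Hf.
  by case: (sing_hilo HA Hf) => Hh Hl; rewrite /wt2 Hh Hl /= !expr0 mulr1.
case: (eqVneq m s) => [Ems|Hms].
  subst m.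
  have HA0 : A0 s \in assemblees s s by rewrite mem_assemblees A0_ok.
  rewrite (bigD1_seq (A0 s)) ?undup_uniq //=.
  have Hfs : firstsing s (A0 s).
    by rewrite /firstsing take_oversize /A0 ?size_map ?size_rev ?size_iota //; apply/allP => B /mapP[x _ ->].
  rewrite Hfs (Hwt _ HA0 Hfs) big1_seq ?addr0 // => A /andP[HA' HA].
  case: ifP => // Hf; have := HA; rewrite mem_assemblees => HA2.
  by case: (sing_char HA2 Hf) => _ E; rewrite E eqxx in HA'.
rewrite big1_seq // => A /andP[_ HA]; case: ifP => // Hf.
move: (HA); rewrite mem_assemblees => HA2.
by case: (sing_char HA2 Hf) => E _; rewrite E eqxx in Hms.
Qed.

Lemma Sp_small m s p : (m < s)%N -> Sp p m s = 0.
Proof.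
move=> Hms; rewrite /Sp big_seq_cond big1 // => A /andP[HA _].
by rewrite mem_assemblees in HA; have := ass_le HA; lia.
Qed.

Definition Pr s m := \prod_(s.-1 <= i < m.-1) (a + b + i%:R).
Definition Cf s p m : R := if p == s then (m == s)%:R else if (m < s)%N then 0
  else 'C(m.-1 - p, s.-1 - p)%:R * Pr s m.

Lemma Cf_rec s p m : (0 < s)%N -> (p < s)%N ->
  Cf s p m.+1 = (a + b + (m.+1 - 2)%:R) * Cf s p m + Cf s p.+1 m.+1.
Proof.
move=> Hs Hps; rewrite /Cf.
have -> : (p == s) = false by apply/negbTE; rewrite neq_ltn Hps.
case: (ltnP m.+1 s) => Hm1.
  rewrite (_ : (m < s)%N) ?mulr0 ?add0r; last by lia.
  by case: eqP => // _; rewrite (_ : (m.+1 == s) = false) //; apply/negbTE; lia.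
case: (eqVneq m.+1 s) => [Es|Ns].
  rewrite (_ : (m < s)%N) ?mulr0 ?add0r; last by lia.
  rewrite /Pr -Es /= binn big_geq // mulr1.
  by case: eqP => // _; rewrite ?ltnn binn mulr1.
have Hms : (s <= m)%N by lia.
rewrite ltnNge Hms /=.
have HP : Pr s m.+1 = Pr s m * (a + b + (m.+1 - 2)%:R).
  rewrite /Pr /= -{1}(prednK (leq_trans Hs Hms)) big_nat_recr /=; last by lia.
  by have -> : (m.+1 - 2)%N = m.-1 by lia.
rewrite HP; case: (eqVneq p.+1 s) => [Eps|Nps].
  rewrite addr0 -Eps /= subnn !bin0; ring.
have -> : (m - p = (m.-1 - p).+1)%N by lia.
have -> : (s.-1 - p = (s.-1 - p.+1).+1)%N by lia.
have -> : (m - p.+1 = m.-1 - p)%N by lia.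
rewrite binS natrD; ring.
Qed.

Lemma Sp_closed s : (0 < s)%N -> forall m p, (p <= s)%N -> Sp p m s = Cf s p m.
Proof.
move=> Hs m; elim: m => [|m IHm] p Hp.
  case: (eqVneq p s) => [->|Nps]; first by rewrite Sp_base /Cf eqxx.
  by rewrite Sp_small // /Cf (negbTE Nps) Hs.
have key : forall k p, (s - p)%N = k -> (p <= s)%N -> Sp p m.+1 s = Cf s p m.+1.
  elim => [|k IHk] q Hk Hq.
    have -> : q = s by lia.
    by rewrite Sp_base /Cf eqxx.
  have Hqs : (q < s)%N by lia.
  rewrite Sp_rec // (IHk q.+1); first last.
  - exact: Hqs.
  - by rewrite subnS Hk.
  rewrite [Sp q _ s]IHm; last exact: ltnW Hqs.
  by rewrite (@Cf_rec s q m Hs Hqs).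
exact: (key (s - p)%N).
Qed.

Lemma sum_rl m s (F : seq (seq nat) -> R) :
  \sum_(A <- assemblees m s) F (rl A) = \sum_(A <- assemblees m s) F A.
Proof.
rewrite -(big_map rl predT F); apply: perm_big; apply: uniq_perm.
- rewrite map_inj_in_uniq ?undup_uniq // => x y Hx Hy Exy.
  rewrite mem_assemblees in Hx; rewrite mem_assemblees in Hy.
  by rewrite -(rlK Hx) Exy (rlK Hy).
- exact: undup_uniq.
- move=> A; apply/mapP/idP => [[B HB ->]|HA].
    rewrite mem_assemblees in HB; rewrite mem_assemblees; exact: (rl_assemblee HB).
  have HA' : is_assemblee m s A by rewrite -mem_assemblees.
  exists (rl A); last by rewrite (rlK HA').
  by rewrite mem_assemblees; apply: rl_assemblee HA'.
Qed.

End Ring.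

Unset Implicit Arguments.
Local Open Scope ring_scope.

Theorem mainTheorem1 (R : fieldType) (n r : nat) (alpha beta : R) :
  (r <= n)%N -> alpha != 0 -> beta != 0 ->
  \sum_(A <- assemblees n.+1 r.+1)
      alpha ^- size (lrs A) * beta ^- size (rls A)
  = 'C(n, r)%:R * \prod_(r <= i < n) (alpha^-1 + beta^-1 + i%:R).
Proof.
move=> Hrn _ _.
have E : \sum_(A <- assemblees n.+1 r.+1) alpha ^- size (lrs A) * beta ^- size (rls A)
   = \sum_(A <- assemblees n.+1 r.+1) wt2 alpha^-1 beta^-1 (rl A).
  apply: eq_big_seq => A; rewrite mem_assemblees => HA.
  by rewrite /wt2 (hi_rl HA) (lo_rl HA) size_lrs size_rls !exprVn.
rewrite E sum_rl.
have -> : \sum_(A <- assemblees n.+1 r.+1) wt2 alpha^-1 beta^-1 A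
        = Sp alpha^-1 beta^-1 0 n.+1 r.+1.
  by rewrite /Sp; apply: eq_bigl => A /=; rewrite /firstsing take0.
rewrite (@Sp_closed _ alpha^-1 beta^-1 r.+1 (ltn0Sn r) n.+1 0%N) //.
by rewrite /Cf /= ltnS ltnNge Hrn /= !subn0 /Pr.
Qed.
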